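(* Let $\mathbb{F}$ be a field and let $n>4$ be an integer. Then for each $p\in\{0,\ldots,n-3\}$ there exists a unital $\mathbb{F}$-algebra $\mathcal{A}$ with $\dim\mathcal{A}=n$ and $l(\mathcal{A})=2^{n-3}+2^{p}$.
   Context: All algebras are finite-dimensional, unital, not necessarily associative algebras over the field $\mathbb{F}$. For a finite generating set $S$ of an algebra $\mathcal{A}$, a word in $S$ is any product (with any bracketing) of finitely many elements of $S$; its length is the number of factors, and the unit $1$ is regarded as a word of length $0$. Let $L_i(S)$ denote the linear span of all words in $S$ of length at most $i$ (so $L_0(S)=\mathbb{F}$). The length of $S$ is $l(S)=\min\{k\ge 0: L_k(S)=\mathcal{A}\}$, and the length of $\mathcal{A}$ is $l(\mathcal{A})=\max\{l(S): S \text{ a finite generating set of } \mathcal{A}\}$. *)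

(* Defs.v *)
From mathcomp Require Import all_boot all_algebra.
Set Implicit Arguments. Unset Strict Implicit. Unset Printing Implicit Defensive.
Import GRing.Theory.
Local Open Scope ring_scope.

(* A (not necessarily associative) algebra of dimension n over F, realised on
   the carrier F^n = 'rV[F]_n, given by structure constants sc i j = e_i e_j
   and a distinguished element [one] (the unit; unitality is a separate
   hypothesis [is_unital]). *)
Record nalg (F : fieldType) (n : nat) := NAlg {
  sc : 'I_n -> 'I_n -> 'rV[F]_n;
  one : 'rV[F]_n }.

Definition mulA (F : fieldType) n (A : nalg F n) (x y : 'rV[F]_n) : 'rV[F]_n :=
  \sum_(i < n) \sum_(j < n) (x 0 i * y 0 j) *: sc A i j.

Definition is_unital (F : fieldType) n (A : nalg F n) : Prop :=
  forall x, mulA A (one A) x = x /\ mulA A x (one A) = x.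

(* Words: fully bracketed products (binary trees) whose leaves are letters. *)
Inductive word (T : Type) := Leaf of T | Node of word T & word T.

Fixpoint leaves T (w : word T) : seq T :=
  match w with Leaf x => [:: x] | Node w1 w2 => leaves w1 ++ leaves w2 end.

Definition wlen T (w : word T) : nat := size (leaves w).

Definition word_in (F : fieldType) n (S : seq 'rV[F]_n) (w : word 'rV[F]_n) :=
  all (fun x => x \in S) (leaves w).

Fixpoint weval (F : fieldType) n (A : nalg F n) (w : word 'rV[F]_n) : 'rV[F]_n :=
  match w with Leaf x => x | Node w1 w2 => mulA A (weval A w1) (weval A w2) end.

(* v \in L_i(S): v is a linear combination of 1 (the word of length 0) and of
   words in S of length at most i. *)
Definition inL (F : fieldType) n (A : nalg F n) (S : seq 'rV[F]_n) (i : nat)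
    (v : 'rV[F]_n) : Prop :=
  exists (c : F) (ps : seq (F * word 'rV[F]_n)),
    all (fun p => word_in S p.2 && (wlen p.2 <= i)%N) ps /\
    v = c *: one A + \sum_(p <- ps) p.1 *: weval A p.2.

Definition generates (F : fieldType) n (A : nalg F n) (S : seq 'rV[F]_n) : Prop :=
  forall v, exists i, inL A S i v.

Definition set_length (F : fieldType) n (A : nalg F n) (S : seq 'rV[F]_n)
    (k : nat) : Prop :=
  (forall v, inL A S k v) /\
  (forall j, (forall v, inL A S j v) -> (k <= j)%N).

Definition alg_length (F : fieldType) n (A : nalg F n) (m : nat) : Prop :=
  (exists S, generates A S /\ set_length A S m) /\
  (forall S k, generates A S -> set_length A S k -> (k <= m)%N).

(* Main.v *)
Require Import Defs.
From mathcomp Require Import all_boot all_algebra.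
From mathcomp Require Import zify.
Set Implicit Arguments. Unset Strict Implicit. Unset Printing Implicit Defensive.
Import GRing.Theory.
Local Open Scope ring_scope.

Local Notation mulA := Defs.mulA.
Section Alg.
Variable F : fieldType.
Variables n p : nat.
Hypothesis n4 : (4 < n)%N.
Hypothesis hp : (p <= n - 3)%N.

Definition E (k : nat) : 'rV[F]_n := \row_(j < n) ((j : nat) == k)%:R.
Definition T (i j : nat) : 'rV[F]_n :=
  ((i == j) && (1 <= i <= n-3)%N)%:R *: E i.+1 +
  ((i == (n-2)%N) && (j == p.+1))%:R *: E (n-1)%N.
Definition scf (i j : 'I_n) : 'rV[F]_n :=
  if (i:nat) == 0%N then E j else if (j:nat) == 0%N then E i else T i j.
Definition Alg : nalg F n := NAlg scf (E 0).

Lemma EE k (j : 'I_n) : E k 0 j = ((j:nat) == k)%:R.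
Proof. by rewrite mxE. Qed.

Lemma scE (i j k : 'I_n) : scf i j 0 k =
  if (i:nat)==0%N then ((k:nat)==j)%:R else if (j:nat)==0%N then ((k:nat)==i)%:R
  else ((((i:nat) == j) && (1 <= i <= n-3)%N && (k == i.+1 :> nat))%:R +
        ((((i:nat) == (n-2)%N) && ((j:nat) == p.+1) && ((k:nat) == (n-1)%N)))%:R : F).
Proof.
rewrite /scf; case: ifP => _; first by rewrite mxE.
case: ifP => _; first by rewrite mxE.
by rewrite /T !mxE -!natrM !mulnb.
Qed.

Lemma collapse (V : zmodType) (f : 'I_n -> V) (m : nat) (Hm : (m < n)%N) :
  (forall i : 'I_n, (i:nat) != m -> f i = 0) -> \sum_i f i = f (Ordinal Hm).
Proof.
move=> H; rewrite (bigD1 (Ordinal Hm)) //= big1 ?addr0 // => i Hi.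

Qed.

Lemma mulA_addl u u' v : mulA Alg (u + u') v = mulA Alg u v + mulA Alg u' v.
Proof.
rewrite /mulA -big_split; apply: eq_bigr => i _; rewrite -big_split.
by apply: eq_bigr => j _; rewrite mxE mulrDl scalerDl.
Qed.
Lemma mulA_addr u v v' : mulA Alg u (v + v') = mulA Alg u v + mulA Alg u v'.
Proof.
rewrite /mulA -big_split; apply: eq_bigr => i _; rewrite -big_split.
by apply: eq_bigr => j _; rewrite mxE mulrDr scalerDl.
Qed.
Lemma mulA_scalel a u v : mulA Alg (a *: u) v = a *: mulA Alg u v.
Proof.
rewrite /mulA scaler_sumr; apply: eq_bigr => i _; rewrite scaler_sumr.
by apply: eq_bigr => j _; rewrite mxE scalerA mulrA.
Qed.
Lemma mulA_scaler a u v : mulA Alg u (a *: v) = a *: mulA Alg u v.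
Proof.
rewrite /mulA scaler_sumr; apply: eq_bigr => i _; rewrite scaler_sumr.
apply: eq_bigr => j _; rewrite mxE scalerA; congr (_ *: _).
by rewrite mulrCA mulrA.
Qed.
Lemma mulA_0l v : mulA Alg 0 v = 0.
Proof. by rewrite /mulA big1 // => i _; rewrite big1 // => j _; rewrite mxE mul0r scale0r. Qed.
Lemma mulA_0r v : mulA Alg v 0 = 0.
Proof. by rewrite /mulA big1 // => i _; rewrite big1 // => j _; rewrite mxE mulr0 scale0r. Qed.

Lemma row_sum (x : 'rV[F]_n) : \sum_(j < n) x 0 j *: E j = x.
Proof.
apply/rowP => k; rewrite summxE (collapse (ltn_ord k)).
  by rewrite mxE EE eqxx mulr1; congr (x 0 _); apply: val_inj.
by move=> j Hj; rewrite mxE EE eq_sym (negbTE Hj) mulr0.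
Qed.

Lemma n0 : (0 < n)%N. Proof. lia. Qed.

Lemma unital : is_unital Alg.
Proof.
move=> x; split.
  rewrite /mulA (collapse n0) => [|i Hi]; last first.
    by apply: big1 => j _; rewrite /= EE (negbTE Hi) mul0r scale0r.
  rewrite /= -[RHS]row_sum; apply: eq_bigr => j _.
  by rewrite EE eqxx mul1r /scf /=.
rewrite /mulA -[RHS]row_sum; apply: eq_bigr => i _.
rewrite (collapse n0) => [|j Hj]; last by rewrite /= EE (negbTE Hj) mulr0 scale0r.
rewrite /= EE eqxx mulr1 /scf /=; case: ifP => // /eqP H.
by rewrite H.
Qed.



Lemma collapse2 (g : 'I_n -> 'I_n -> F) m m' (Hm : (m < n)%N) (Hm' : (m' < n)%N) :
  (forall i j : 'I_n, ((i:nat) != m) || ((j:nat) != m') -> g i j = 0) ->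
  \sum_i \sum_j g i j = g (Ordinal Hm) (Ordinal Hm').
Proof.
move=> H; rewrite (collapse Hm) => [|i Hi].
  by rewrite (collapse Hm') // => j Hj; apply: H; rewrite Hj orbT.
by apply: big1 => j _; apply: H; rewrite Hi.
Qed.

Lemma mulA_coord u v k : mulA Alg u v 0 k = \sum_i \sum_j u 0 i * v 0 j * scf i j 0 k.
Proof.
rewrite /mulA summxE; apply: eq_bigr => i _; rewrite summxE.
by apply: eq_bigr => j _; rewrite mxE.
Qed.

Lemma sc0 (i j k : 'I_n) :
  ~~ [|| ((i:nat)==0%N) && ((k:nat)==j),
         ((i:nat)!=0%N) && ((j:nat)==0%N) && ((k:nat) == i),
         ((i:nat)!=0%N) && ((j:nat)!=0%N) && (((i:nat) == j) && (1 <= i <= n-3)%N && ((k:nat) == i.+1))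
       | ((i:nat)!=0%N) && ((j:nat)!=0%N) && (((i:nat) == (n-2)%N) && ((j:nat) == p.+1) && ((k:nat) == (n-1)%N))] ->
  scf i j 0 k = 0.
Proof.
move=> H; rewrite scE; case: ifP => Hi.
  by have -> : ((k:nat) == j) = false by lia.
case: ifP => Hj.
  by have -> : ((k:nat) == i) = false by lia.
have -> : (((i:nat) == j) && (1 <= i <= n-3)%N && ((k:nat) == i.+1)) = false by lia.
have -> : (((i:nat) == (n-2)%N) && ((j:nat) == p.+1) && ((k:nat) == (n-1)%N)) = false by lia.
by rewrite addr0.
Qed.

Lemma sc1 (i j k : 'I_n) : (i:nat) != 0%N -> (j:nat) != 0%N ->
  (((i:nat) == j) && (1 <= i <= n-3)%N && ((k:nat) == i.+1)) (+)
  (((i:nat) == (n-2)%N) && ((j:nat) == p.+1) && ((k:nat) == (n-1)%N)) ->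
  scf i j 0 k = 1.
Proof.
move=> Hi Hj H; rewrite scE (negbTE Hi) (negbTE Hj).
move: H; case: (_ && _); case: (_ && _) => //= _.
  by rewrite addr0.
by rewrite add0r.
Qed.

Definition P m (y : 'rV[F]_n) :=
  (forall i : 'I_n, (i < m)%N -> y 0 i = 0) /\ (forall i : 'I_n, (i:nat) = m -> y 0 i != 0).

Lemma lowP m (y : 'rV[F]_n) (i : 'I_n) : (forall i : 'I_n, (i < m)%N -> y 0 i = 0) ->
  y 0 i != 0 -> (m <= i)%N.
Proof. by move=> lo Hu; rewrite leqNgt; apply: contra Hu => /lo ->. Qed.

Lemma sq_step u m : (1 <= m <= n-3)%N -> P m u -> P m.+1 (mulA Alg u u).
Proof.
move=> Hm [lo nz]; split.
  move=> k Hk; rewrite mulA_coord big1 // => i _; rewrite big1 // => j _.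
  have [->|Hu] := eqVneq (u 0 i) 0; first by rewrite !mul0r.
  have [->|Hv] := eqVneq (u 0 j) 0; first by rewrite mulr0 mul0r.
  have := lowP lo Hu; have := lowP lo Hv => H1 H2.
  by rewrite sc0 ?mulr0 //; lia.
move=> k Hk; have Hm' : (m < n)%N by lia.
rewrite mulA_coord (collapse2 Hm' Hm').
  rewrite sc1 /=; try lia.
  by rewrite mulr1 mulf_neq0 // nz.
move=> i j Hij.
have [->|Hu] := eqVneq (u 0 i) 0; first by rewrite !mul0r.
have [->|Hv] := eqVneq (u 0 j) 0; first by rewrite mulr0 mul0r.
have := lowP lo Hu; have := lowP lo Hv => H1 H2.
by rewrite sc0 ?mulr0 //; lia.
Qed.

Lemma last_step u v : P (n-2)%N u -> P p.+1 v -> P (n-1)%N (mulA Alg u v).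
Proof.
move=> [lo nz] [lo' nz']; split.
  move=> k Hk; rewrite mulA_coord big1 // => i _; rewrite big1 // => j _.
  have [->|Hu] := eqVneq (u 0 i) 0; first by rewrite !mul0r.
  have [->|Hv] := eqVneq (v 0 j) 0; first by rewrite mulr0 mul0r.
  have := lowP lo Hu; have := lowP lo' Hv => H1 H2.
  by rewrite sc0 ?mulr0 //; lia.
move=> k Hk; have Hm : (n-2 < n)%N by lia. have Hm' : (p.+1 < n)%N by lia.
rewrite mulA_coord (collapse2 Hm Hm').
  rewrite sc1 /=; try lia.
  by rewrite mulr1 mulf_neq0 // ?nz ?nz'.
move=> i j Hij.
have [->|Hu] := eqVneq (u 0 i) 0; first by rewrite !mul0r.
have [->|Hv] := eqVneq (v 0 j) 0; first by rewrite mulr0 mul0r.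
have := lowP lo Hu; have := lowP lo' Hv => H1 H2.
by rewrite sc0 ?mulr0 //; lia.
Qed.

Lemma coord1 (u v : 'rV[F]_n) (o : 'I_n) : (o:nat) = 1%N -> u 0 o = 0 -> v 0 o = 0 -> mulA Alg u v 0 o = 0.
Proof.
move=> Ho Hu0 Hv0; rewrite mulA_coord big1 // => i _; rewrite big1 // => j _.
have [->|Hu] := eqVneq (u 0 i) 0; first by rewrite !mul0r.
have [->|Hv] := eqVneq (v 0 j) 0; first by rewrite mulr0 mul0r.
have Hi : (i:nat) != 1%N by apply: contra Hu => /eqP Hi; rewrite (_ : i = o) ?Hu0 //; apply: val_inj; rewrite /= Hi Ho.
have Hj : (j:nat) != 1%N by apply: contra Hv => /eqP Hj; rewrite (_ : j = o) ?Hv0 //; apply: val_inj; rewrite /= Hj Ho.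
by rewrite sc0 ?mulr0 //; lia.
Qed.

Lemma mulE a b (Ha : (a < n)%N) (Hb : (b < n)%N) :
  mulA Alg (E a) (E b) = scf (Ordinal Ha) (Ordinal Hb).
Proof.
rewrite /mulA (collapse Ha) => [|i Hi]; last first.
  by apply: big1 => j _; rewrite EE (negbTE Hi) mul0r scale0r.
rewrite (collapse Hb) => [|j Hj]; last by rewrite !EE (negbTE Hj) mulr0 scale0r.
by rewrite !EE !eqxx mulr1 scale1r.
Qed.

Section L.
Variable S : seq 'rV[F]_n.
Local Notation L := (inL Alg S).

Lemma inL_add i u v : L i u -> L i v -> L i (u + v).
Proof.
case=> [c [ps [H1 ->]]] [d [qs [H2 ->]]]; exists (c + d), (ps ++ qs); split.
  by rewrite all_cat H1 H2.
by rewrite big_cat scalerDl addrACA.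
Qed.

Lemma inL_scale i a u : L i u -> L i (a *: u).
Proof.
case=> [c [ps [H1 ->]]]; exists (a * c), [seq (a * x.1, x.2) | x <- ps]; split.
  by rewrite all_map.
rewrite big_map scalerDr scaler_sumr scalerA; congr (_ + _).
by apply: eq_bigr => x _; rewrite scalerA.
Qed.

Lemma inL_0 i : L i 0.
Proof. by exists 0, [::]; split => //; rewrite big_nil scale0r addr0. Qed.

Lemma inL_E0 i c : L i (c *: E 0).
Proof. by exists c, [::]; split => //; rewrite big_nil addr0. Qed.

Lemma inL_mono i j u : (i <= j)%N -> L i u -> L j u.
Proof.
move=> hij [c [ps [H1 ->]]]; exists c, ps; split => //.
by apply: sub_all H1 => x /andP[-> h]; exact: leq_trans h hij.
Qed.

Lemma inL_word w : word_in S w -> L (wlen w) (weval Alg w).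
Proof.
move=> Hw; exists 0, [:: (1, w)]; split; first by rewrite /= Hw leqnn.
by rewrite big_seq1 scale0r add0r scale1r.
Qed.

Lemma wlen_node (w1 w2 : word 'rV[F]_n) : wlen (Node w1 w2) = (wlen w1 + wlen w2)%N.
Proof. by rewrite /wlen /= size_cat. Qed.

Lemma word_in_node (w1 w2 : word 'rV[F]_n) : word_in S (Node w1 w2) = word_in S w1 && word_in S w2.
Proof. by rewrite /word_in /= all_cat. Qed.

Lemma unitL x : mulA Alg (E 0) x = x. Proof. exact: (unital x).1. Qed.
Lemma unitR x : mulA Alg x (E 0) = x. Proof. exact: (unital x).2. Qed.

Lemma word_mul w b v : word_in S w -> L b v -> L (wlen w + b) (mulA Alg (weval Alg w) v).
Proof.
move=> Hw [d [qs [H1 ->]]]; rewrite mulA_addr mulA_scaler unitR; apply: inL_add.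
  by apply: inL_scale; apply: inL_mono (inL_word Hw); exact: leq_addr.
elim: qs H1 => [_|q qs IH] /=; first by rewrite big_nil mulA_0r; exact: inL_0.
move=> /andP[/andP[Hq1 Hq2] H1]; rewrite big_cons mulA_addr mulA_scaler.
apply: inL_add; last exact: IH.
apply: inL_scale; apply: (@inL_mono (wlen (Node w q.2))).
  by rewrite wlen_node leq_add2l.
by apply: inL_word; rewrite word_in_node Hw.
Qed.

Lemma inL_mul a b u v : L a u -> L b v -> L (a + b) (mulA Alg u v).
Proof.
move=> [c [ps [H1 ->]]] Hv; rewrite mulA_addl mulA_scalel unitL; apply: inL_add.
  by apply: inL_scale; apply: inL_mono Hv; exact: leq_addl.
elim: ps H1 => [_|q ps IH] /=; first by rewrite big_nil mulA_0l; exact: inL_0.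
move=> /andP[/andP[Hq1 Hq2] H1]; rewrite big_cons mulA_addl mulA_scalel.
apply: inL_add; last exact: IH.
apply: inL_scale; apply: (@inL_mono (wlen q.2 + b)); first by rewrite leq_add2r.
exact: word_mul.
Qed.

End L.

Lemma sum_all0 (T : Type) (s : seq T) (Q : pred T) (f : T -> F) :
  (forall x, Q x -> f x = 0) -> all Q s -> \sum_(x <- s) f x = 0.
Proof.
move=> H; elim: s => [|x s IH] /=; first by rewrite big_nil.
by case/andP => Hx Hs; rewrite big_cons H // IH // addr0.
Qed.

Lemma n1 : (1 < n)%N. Proof. lia. Qed.
Definition o1 : 'I_n := Ordinal n1.
Definition o0 : 'I_n := Ordinal n0.

Lemma has1 S : generates Alg S -> has (fun s : 'rV[F]_n => s 0 o1 != 0) S.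
Proof.
move=> Hg; apply/negPn/negP => /hasPn Hn.
have Hw : forall w, word_in S w -> weval Alg w 0 o1 = 0.
  elim=> [x|w1 IH1 w2 IH2] /=.
    rewrite /word_in /= andbT => Hx.
    by move: (Hn x Hx); rewrite negbK => /eqP.
  rewrite word_in_node => /andP[h1 h2]; apply: coord1 => //; [exact: IH1|exact: IH2].
case: (Hg (E 1)) => i [c [ps [H1 H2]]].
have := congr1 (fun v : 'rV[F]_n => v 0 o1) H2.
rewrite /= !mxE /= summxE (sum_all0 _ H1) ?mulr0 ?addr0; first by move/eqP; rewrite oner_eq0.
by move=> x /andP[Hx _]; rewrite mxE Hw ?mulr0.
Qed.

Definition K := (2^(n-3) + 2^p)%N.

Section Up.
Variable S : seq 'rV[F]_n.
Variable s : 'rV[F]_n.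
Hypothesis sS : s \in S.
Hypothesis s1 : s 0 o1 != 0.

Definition x1 := s - s 0 o0 *: E 0.

Lemma x1P : P 1 x1 /\ inL Alg S 1 x1.
Proof.
split; first split.
- move=> k Hk; have -> : k = o0 by apply: val_inj => /=; lia.
  by rewrite !mxE /= mulr1 subrr.
- move=> k Hk; have -> : k = o1 by apply: val_inj => /=; lia.
  by rewrite !mxE /= mulr0 subr0.
rewrite /x1 -scaleNr; apply: inL_add; last exact: inL_E0.
by apply: (@inL_word S (Leaf s)); rewrite /word_in /= sS.
Qed.

Definition xs m := iter m.-1 (fun y => mulA Alg y y) x1.

Lemma xsP m : (1 <= m <= n-2)%N -> P m (xs m) /\ inL Alg S (2^(m-1)) (xs m).
Proof.
elim: m => [//|m IH] Hm; case: m IH Hm => [|m] IH Hm; first exact: x1P.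
have [H1 H2] := IH ltac:(lia).
change (xs m.+2) with (mulA Alg (xs m.+1) (xs m.+1)); split.
  by apply: sq_step => //; lia.
have -> : (2^(m.+2 - 1) = 2^(m.+1-1) + 2^(m.+1-1))%N by rewrite !subn1 /= expnS; lia.
exact: inL_mul.
Qed.

Definition y i := if (i <= n-2)%N then xs i else mulA Alg (xs (n-2)) (xs p.+1).

Lemma yP i : (1 <= i <= n-1)%N -> P i (y i) /\ inL Alg S K (y i).
Proof.
move=> Hi; rewrite /y; case: ifP => Hi2.
  have [H1 H2] := xsP (m := i) ltac:(lia); split => //; apply: inL_mono H2.
  apply: leq_trans (leq_addr _ _); apply: leq_pexp2l => //; lia.
have -> : i = (n-1)%N by lia.
have [a1 a2] := xsP (m := (n-2)%N) ltac:(lia).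
have [b1 b2] := xsP (m := p.+1) ltac:(lia).
split; first exact: last_step.
have := inL_mul a2 b2.
have E1 : (n-2-1 = n-3)%N by lia.
have E2 : (p.+1 - 1 = p)%N by lia.
by rewrite E1 E2.
Qed.

Lemma down d : (d <= n-1)%N -> forall v : 'rV[F]_n,
  (forall k : 'I_n, (k < n - d)%N -> v 0 k = 0) -> inL Alg S K v.
Proof.
elim: d => [_ v Hv|d IH Hd v Hv].
  have -> : v = 0 by apply/rowP => k; rewrite mxE Hv // subn0 ltn_ord.
  exact: inL_0.
set i := (n - d.+1)%N.
have Hi : (i < n)%N by lia.
have [[lo nz] Hy] := yP (i := i) ltac:(lia).
set a := v 0 (Ordinal Hi) / y i 0 (Ordinal Hi).
have -> : v = (v - a *: y i) + a *: y i by rewrite subrK.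
apply: inL_add; last exact: inL_scale.
apply: IH; first lia.
move=> k Hk; rewrite !mxE.
case: (ltnP k i) => Hki.
  by rewrite lo // Hv ?mulr0 ?subr0.
have -> : k = Ordinal Hi by apply: val_inj => /=; lia.
by rewrite /a divfK ?subrr //; apply: nz.
Qed.

Lemma upper v : inL Alg S K v.
Proof.
have -> : v = (v - v 0 o0 *: E 0) + v 0 o0 *: E 0 by rewrite subrK.
apply: inL_add; last exact: inL_E0.
apply: (@down (n-1)%N) => // k Hk.
have -> : k = o0 by apply: val_inj => /=; lia.
by rewrite !mxE /= mulr1 subrr.
Qed.

End Up.

Definition len k := if (k <= n-2)%N then (2^(k-1))%N else K.

Lemma pow_double a : (1 <= a)%N -> (2^(a-1) + 2^(a-1) = 2^(a.+1 - 1))%N.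
Proof. case: a => // a _; rewrite !subn1 /= expnS; lia. Qed.

Lemma word_inv w : word_in [:: E 1] w -> weval Alg w = 0 \/
  exists k, (1 <= k <= n-1)%N /\ weval Alg w = E k /\ wlen w = len k.
Proof.
elim: w => [x|w1 IH1 w2 IH2].
  rewrite /word_in /= andbT inE => /eqP ->; right; exists 1%N; split; first lia.
  by split => //; rewrite /len ifT //; lia.
rewrite word_in_node => /andP[h1 h2].
case: (IH1 h1) => [/= ->|[a [Ha [/= -> La]]]]; first by left; rewrite mulA_0l.
case: (IH2 h2) => [->|[b [Hb [-> Lb]]]]; first by left; rewrite mulA_0r.
have Ha' : (a < n)%N by lia. have Hb' : (b < n)%N by lia.
rewrite (mulE Ha' Hb') /scf /=.
have -> : (a == 0%N) = false by lia. have -> : (b == 0%N) = false by lia.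
rewrite /T wlen_node La Lb.
have [H1|H1] := boolP ((a == b) && (1 <= a <= n-3)%N).
  have -> : ((a == (n-2)%N) && (b == p.+1)) = false by lia.
  right; exists a.+1; split; first lia.
  split; first by rewrite scale1r scale0r addr0.
  have Eb : b = a by lia.
  rewrite Eb /len; have c1 : (a <= n-2)%N by lia. have c2 : (a < n-2)%N by lia.
  rewrite c1 c2; apply: pow_double; lia.
rewrite scale0r add0r.
have [H2|H2] := boolP ((a == (n-2)%N) && (b == p.+1)).
  right; exists (n-1)%N; split; first lia.
  split; first by rewrite ?H2 scale1r.
  have c1 : (a <= n-2)%N by lia. have c2 : (b <= n-2)%N by lia.
  have c3 : (n - 1 <= n-2)%N = false by lia.
  have e1 : (a - 1 = n-3)%N by lia. have e2 : (b - 1 = p)%N by lia.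
  by rewrite /len c1 c2 c3 /K e1 e2.
by left; rewrite ?(negbTE H2) scale0r.
Qed.

Lemma lower j : (forall v, inL Alg [:: E 1] j v) -> (K <= j)%N.
Proof.
move=> H; rewrite leqNgt; apply/negP => Hj.
have on : ((n-1) < n)%N by lia.
case: (H (E (n-1))) => c [ps [H1 H2]].
have := congr1 (fun v : 'rV[F]_n => v 0 (Ordinal on)) H2.
rewrite /= !mxE /= summxE (sum_all0 _ H1) => [|x /andP[Hx Hl]].
  have -> : ((n-1)%N == 0%N) = false by lia.
  by rewrite eqxx mulr0 addr0 => /eqP; rewrite oner_eq0.
rewrite mxE; case: (word_inv Hx) => [->|[k [Hk [-> Lk]]]]; first by rewrite mxE mulr0.
rewrite mxE /=.
have -> : ((n-1)%N == k) = false.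
  apply/negP => /eqP Ek; move: Hl; rewrite Lk /len -Ek; case: ifP => Hc; lia.
by rewrite mulr0.
Qed.

End Alg.

Local Close Scope ring_scope.

Theorem theorem4p1 (F : fieldType) (n : nat) : (4 < n)%N ->
  forall p : nat, (p <= n - 3)%N ->
  exists A : nalg F n, is_unital A /\ alg_length A (2 ^ (n - 3) + 2 ^ p).
Proof.
move=> Hn p Hp; exists (Alg F n p); split; first exact: (unital Hn Hp).
change (2 ^ (n - 3) + 2 ^ p)%N with (K n p).
have sS : E F n 1 \in [:: E F n 1] by rewrite mem_head.
have s1 : E F n 1 0%R (o1 Hn Hp) != 0%R by rewrite mxE /= GRing.oner_eq0.
have Hup := @upper F n p Hn Hp _ _ sS s1.
split.
  exists [:: E F n 1]; split; first by move=> v; exists (K n p); exact: Hup.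
  split; first exact: Hup.
  exact: (lower Hn Hp).
move=> S k Hg [Hk Hmin]; apply: Hmin.
have /hasP [s sS' s1'] := has1 Hn Hp Hg.
exact: (@upper F n p Hn Hp _ _ sS' s1').
Qed.
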